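(* Let $\mathbf{k}$ be a field with $\mathrm{char}(\mathbf{k}) > d$, let $n \geq 1$, let $\alpha_1,\dots,\alpha_d \in M_n(\mathbf{k})$, and put $T = x_1\alpha_1 + \dots + x_d\alpha_d \in M_n(\mathbf{k}\langle x_1,\dots,x_d\rangle)$. Suppose that \[ \chi_d(T) := \sum_{\sigma\in S_d}(T - x_{\sigma(1)})(T - x_{\sigma(2)})\cdots(T - x_{\sigma(d)}) = 0 \quad \text{in } M_n(\mathbf{k}\langle x_1,\dots,x_d\rangle). \] Then: (1) for some $i \in \{1,\dots,d\}$, $\alpha_i$ has an eigenvector with eigenvalue $1$; and (2) for every $i$, if $m \in \mathbf{k}^n$ satisfies $\alpha_i m = m$, then $\alpha_j m = 0$ for all $j \neq i$.
   Context: $\mathbf{k}\langle x_1,\dots,x_d\rangle$ is the free associative $\mathbf{k}$-algebra on $x_1,\dots,x_d$; in $M_n(\mathbf{k}\langle x_1,\dots,x_d\rangle)$ the scalars $x_i$ commute with the constant matrices $\alpha_j$, and $x_{\sigma(j)}$ denotes the scalar matrix $x_{\sigma(j)}\cdot I_n$. The product over $j=1,\dots,d$ is taken in that order. *)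

(* Defs.v *)
From HB Require Import structures.
From mathcomp Require Import all_boot all_order all_algebra all_fingroup.
Set Implicit Arguments. Unset Strict Implicit. Unset Printing Implicit Defensive.
Import GRing.Theory.
Local Open Scope ring_scope.

(* Elements of M_n(k<x_1,...,x_d>) are represented as noncommutative
   (formal) series in x_1..x_d with coefficients in M_n(k): a function from
   words over 'I_d to 'M[k]_n (the coefficient of the monomial x_{w_1}...x_{w_m}).
   Since the x_i commute with constant matrices, M_n(k<x>) = M_n(k)<x>;
   polynomials embed injectively into series, so equalities agree. *)
Definition ncmx (K : fieldType) (n d : nat) := seq 'I_d -> 'M[K]_n.

Section NC.
Variables (K : fieldType) (n d : nat).
Local Notation S := (ncmx K n d).

Definition nc_zero : S := fun _ => 0.
Definition nc_add (P Q : S) : S := fun w => P w + Q w.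
Definition nc_opp (P : S) : S := fun w => - P w.
Definition nc_mul (P Q : S) : S :=
  fun w => \sum_(k < (size w).+1) P (take k w) *m Q (drop k w).
Definition nc_one : S := fun w => if w is [::] then 1%:M else 0.
Definition nc_const (A : 'M[K]_n) : S := fun w => if w is [::] then A else 0.
Definition nc_var (i : 'I_d) : S := fun w => if w == [:: i] then 1%:M else 0.

Definition ncT (alpha : 'I_d -> 'M[K]_n) : S :=
  \big[nc_add/nc_zero]_(i < d) nc_mul (nc_var i) (nc_const (alpha i)).

Definition chi_d (alpha : 'I_d -> 'M[K]_n) : S :=
  \big[nc_add/nc_zero]_(s : 'S_d)
     \big[nc_mul/nc_one]_(j < d) nc_add (ncT alpha) (nc_opp (nc_var (s j))).
End NC.

(* Main.v *)
Require Import Defs.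
From HB Require Import structures.
From mathcomp Require Import all_boot all_order all_algebra all_fingroup.
Import GRing.Theory.
Local Open Scope ring_scope.
Set Implicit Arguments. Unset Strict Implicit.

Section NCL.
Variables (K : fieldType) (n' d : nat).
Local Notation n := n'.+1.
Local Notation S := (ncmx K n d).

Definition deg1 (P : S) := forall u, size u != 1%N -> P u = 0.

Lemma nc_mul_deg1 (P Q : S) x w : deg1 P -> P [::] = 0 ->
  nc_mul P Q (x :: w) = P [:: x] * Q w.
Proof.
move=> dP P0; rewrite /nc_mul /= big_ord_recl /= P0 mul0mx add0r.
rewrite big_ord_recl /= take0 drop0 big1 ?addr0 //.
move=> i _; rewrite dP ?mul0mx //=.
rewrite size_take /bump /= !add0n; case: ifP => // _; by case: w i => [[]|].
Qed.
Lemma dummy : True. Proof. done.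
Qed.

Lemma nc_big_deg1 m (F : 'I_m -> S) (w : seq 'I_d) :
  (forall j, deg1 (F j)) -> size w = m ->
  (\big[@nc_mul K n d/(@nc_one K n d)]_(j < m) F j) w =
   \prod_(j < m) F j (nth [::] [seq [:: x] | x <- w] j).
Proof.
elim: m F w => [|m IH] F w dF sw.
  by case: w sw => // _; rewrite !big_ord0.
case: w sw => // x w [sw].
rewrite !big_ord_recl nc_mul_deg1 //; last by apply: dF.
by rewrite IH //= => j; apply: dF.
Qed.

Lemma nc_sum_eval I (r : seq I) (P : pred I) (F : I -> S) w :
  (\big[@nc_add K n d/@nc_zero K n d]_(i <- r | P i) F i) w = \sum_(i <- r | P i) F i w.
Proof.
by elim/big_rec2: _ => // i x y _ <-.
Qed.

Lemma nc_var_deg1 i : deg1 (@nc_var K n d i).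
Proof. by move=> u su; rewrite /nc_var; case: eqP => // E; rewrite E in su. Qed.

Lemma ncT_deg1 (alpha : 'I_d -> 'M[K]_n) : deg1 (ncT alpha).
Proof.
move=> u su; rewrite /ncT nc_sum_eval big1 // => i _.
rewrite /nc_mul big1 // => k _.
rewrite /nc_const; case E: (drop k u) => [|y v]; last by rewrite mulmx0.
rewrite /nc_var; case: eqP; last by rewrite mul0mx.
have : size (drop k u) = 0%N by rewrite E.
rewrite size_drop => /eqP; rewrite subn_eq0 => /take_oversize ->.
by move=> Eu; rewrite Eu in su.
Qed.

Lemma ncT1 (alpha : 'I_d -> 'M[K]_n) x : ncT alpha [:: x] = alpha x.
Proof.
rewrite /ncT nc_sum_eval (bigD1 x) //= big1 ?addr0.
  rewrite /nc_mul big_ord_recl big_ord_recl big_ord0 /= /nc_var /= eqxx.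
  by rewrite mul1mx mul0mx add0r addr0.
move=> i ne; rewrite /nc_mul big_ord_recl big_ord_recl big_ord0 /= /nc_var /=.
rewrite mul0mx add0r addr0; case: eqP; last by rewrite mul0mx.
by case=> E; rewrite E eqxx in ne.
Qed.

Definition coef (alpha : 'I_d -> 'M[K]_n) (x y : 'I_d) : 'M[K]_n :=
  alpha x - (x == y)%:R%:M.

Lemma chi_coef (alpha : 'I_d -> 'M[K]_n) (w : seq 'I_d) : size w = d ->
  chi_d alpha w = \sum_(s : 'S_d) \prod_(j < d)
     coef alpha (nth j w j) (s j).
Proof.
move=> sw; rewrite /chi_d nc_sum_eval; apply: eq_bigr => s _.
rewrite nc_big_deg1 //; last first.
  move=> j u su; rewrite /nc_add /nc_opp ncT_deg1 // nc_var_deg1 //.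
  by rewrite oppr0 addr0.
apply: eq_bigr => j _.
rewrite (nth_map j) ?sw // /nc_add /nc_opp ncT1 /coef /nc_var.
by rewrite eqseq_cons andbT; case: eqP => _; rewrite /= ?raddf0.
Qed.
End NCL.

Lemma natK_neq0 (K : fieldType) d k : (forall p, p \in [pchar K] -> (d < p)%N) ->
  (0 < k)%N -> (k <= d)%N -> k%:R != 0 :> K.
Proof.
move=> H k0 kd; rewrite natf_neq0_pchar; apply/pnatP => // p pp pk.
rewrite inE /=; apply/negP => /H; have := dvdn_leq k0 pk.
move=> a b; have := leq_trans a kd; rewrite leqNgt b //.
Qed.

Lemma factK_neq0 (K : fieldType) d k : (forall p, p \in [pchar K] -> (d < p)%N) ->
  (k <= d)%N -> k`!%:R != 0 :> K.
Proof.
move=> H; elim: k => [|k IH] kd; first by rewrite oner_neq0.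
rewrite factS natrM mulf_neq0 //; [exact: (natK_neq0 H) | apply: IH; exact: ltnW].
Qed.

Lemma card_fix (d' : nat) (i : 'I_d'.+1) :
  #|[pred s : 'S_d'.+1 | s ord0 == i]| = d'`!.
Proof.
rewrite -sum1_card (reindex_inj (mulIg (tperm ord0 i))) /=.
rewrite (eq_bigl (fun s : 'S_d'.+1 => s \in [pred s : 'S_d'.+1 | s ord0 == ord0])); last first.
  move=> s; rewrite !inE /= permM -[X in _ == X](tpermL ord0 i) (inj_eq perm_inj) //.
rewrite (sum1_card [pred s : 'S_d'.+1 | s ord0 == ord0]).
have -> : d'`! = #|[set~ (ord0 : 'I_d'.+1)]|`! by rewrite cardsC1 card_ord.
rewrite -card_perm.
apply: eq_card => s; rewrite !inE /perm_on /=; apply/idP/idP.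
  move=> /eqP s0; apply/subsetP => x; rewrite !inE; apply: contra => /eqP ->.
  by rewrite s0.
by move/subsetP/(_ ord0); rewrite !inE eqxx; case: eqP => // _; apply.
Qed.

Lemma prod_apply (K : fieldType) n' r (F : 'I_r -> 'M[K]_n'.+1) (c : 'I_r -> K)
   (m : 'cV[K]_n'.+1) :
  (forall k, F k *m m = c k *: m) -> (\prod_(k < r) F k) *m m = (\prod_(k < r) c k) *: m.
Proof.
elim: r F c => [|r IH] F c H; first by rewrite !big_ord0 mul1mx scale1r.
rewrite !big_ord_recl -mulmxA (IH _ (fun k => c (lift ord0 k))); last by move=> k; apply: H.
by rewrite -scalemxAr H scalerA mulrC.
Qed.

Lemma part2 (K : fieldType) (d n' : nat) (alpha : 'I_d -> 'M[K]_n'.+1) :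
  (forall p : nat, p \in [pchar K] -> (d < p)%N) ->
  (forall w : seq 'I_d, chi_d alpha w = 0) ->
  (forall (i : 'I_d) (m : 'cV[K]_n'.+1), alpha i *m m = m ->
     forall j : 'I_d, j != i -> alpha j *m m = 0).
Proof.
case: d alpha => [|d'] alpha Hc Hchi i; first by case: i.
move=> m Hm j ji.
have := Hchi (j :: nseq d' i).
rewrite chi_coef; last by rewrite /= size_nseq.
move => /(congr1 (mulmx^~ m)).
rewrite mul0mx mulmx_suml.
under eq_bigr => s _.
  rewrite big_ord_recl -mulmxA (@prod_apply K n' d' _ (fun k => 1 - (i == s (lift ord0 k))%:R)); last first.
    move=> k /=; rewrite nth_nseq (ltn_ord k) /coef mulmxBl Hm mul_scalar_mx.
    by rewrite -{1}(scale1r m) -scalerBl.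
  over.
have key : forall s : 'S_d'.+1,
    \prod_(k < d') (1 - (i == s (lift ord0 k))%:R) = (s ord0 == i)%:R :> K.
  move=> s; case: (s ord0 =P i) => [E|ne].
    rewrite big1 // => k _; rewrite -E (inj_eq perm_inj).
    by rewrite (negbTE (neq_lift _ _)) subr0.
  case: (unliftP ord0 (s^-1 i)%g) => [k El|El]; last first.
    by case: ne; rewrite -El permKV.
  rewrite (bigD1 k) //= -El permKV eqxx subrr mul0r //.
under eq_bigr => s _.
  rewrite key -scalemxAr.
  have -> : ((s ord0 == i)%:R : K) *: (coef alpha (nth ord0 (j :: nseq d' i) ord0) (s ord0) *m m)
     = ((s ord0 == i)%:R : K) *: (alpha j *m m).
    case: (s ord0 =P i) => [->|_] ?; last by rewrite !scale0r.
    by rewrite /coef /= (negbTE ji) raddf0 subr0.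
  over.
rewrite -scaler_suml.
have -> : \sum_(s : 'S_d'.+1) (s ord0 == i)%:R = (d'`!)%:R :> K.
  rewrite -(card_fix i) -sum1_card natr_sum [RHS]big_mkcond /=.
  by apply: eq_bigr => s _; rewrite inE; case: eqP.
move/eqP; rewrite scaler_eq0 => /orP [|/eqP //].
by rewrite (negbTE (factK_neq0 Hc (leqnSn _))).
Qed.

Section Part1.
Variables (K : fieldType) (d n' : nat) (alpha : 'I_d -> 'M[K]_n'.+1).
Hypothesis Hc : forall p : nat, p \in [pchar K] -> (d < p)%N.
Hypothesis Hchi : forall w : seq 'I_d, chi_d alpha w = 0.
Local Notation n := n'.+1.
Local Notation R := {poly K}.

Definition pt (l : 'I_d) : K := (l : nat)%:R.

Lemma tt_inj (l k : 'I_d) : l != k -> pt k - pt l != 0.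
Proof.
have H : forall a b : 'I_d, (a < b)%N -> pt b - pt a != 0.
  move=> a b ab; rewrite /pt -natrB; last exact: ltnW.
  apply: (natK_neq0 Hc); first by rewrite subn_gt0.
  exact: leq_trans (leq_subr _ _) (ltnW (ltn_ord b)).
move=> lk; case: (ltngtP l k) => [h|h|/val_inj E]; first exact: H.
  by rewrite -opprB oppr_eq0 H.
by rewrite E eqxx in lk.
Qed.

Definition L (k : 'I_d) : R :=
  \prod_(l | l != k) (('X - (pt l)%:P) * ((pt k - pt l)^-1)%:P).

Lemma L_eval k j : (L k).[pt j] = (k == j)%:R.
Proof.
rewrite /L horner_prod; case: eqP => [<-|/eqP kj].
  rewrite big1 // => l lk; rewrite hornerM hornerXsubC hornerC divff //.
  exact: tt_inj.
rewrite (bigD1 j) 1?eq_sym //= hornerM hornerXsubC subrr mul0r mul0r //.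
Qed.

Definition amx (k : 'I_d) : 'M[R]_n := map_mx polyC (alpha k).
Definition Smx : 'M[R]_n := \sum_k L k *: amx k.

Lemma factor_expand (y : 'I_d) :
  Smx - (L y)%:M = \sum_k L k *: map_mx polyC (coef alpha k y).
Proof.
rewrite /coef.
under [RHS]eq_bigr => k _ do rewrite map_mxB map_scalar_mx scalerBr.
rewrite sumrB; congr (_ - _).
rewrite (bigD1 y) //= big1 ?addr0.
  by rewrite eqxx rmorph1 scale_scalar_mx mulr1.
move=> k ky; by rewrite (negbTE ky) /= polyC0 raddf0 scaler0.
Qed.

Lemma main_identity : \prod_(j < d) (Smx - (L j)%:M) = 0.
Proof.
have E1 : forall s : 'S_d,
    \prod_(j < d) (Smx - (L (s j))%:M) = \prod_(j < d) (Smx - (L j)%:M).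
  move=> s.
  have hx : forall c, Smx - c%:M = horner_mx Smx ('X - c%:P).
    by move=> c; rewrite rmorphB /= horner_mx_X horner_mx_C.
  under eq_bigr do rewrite hx.
  under [RHS]eq_bigr do rewrite hx.
  rewrite -!rmorph_prod; congr (horner_mx Smx _).
  by rewrite [RHS](reindex_inj (@perm_inj _ s)).
have E2 : \sum_(s : 'S_d) \prod_(j < d) (Smx - (L (s j))%:M) = 0.
  under eq_bigr => s _ do under eq_bigr => j _ do rewrite factor_expand.
  under eq_bigr => s _ do rewrite bigA_distr_bigA /=.
  rewrite exchange_big /=; apply: big1 => f _.
  under eq_bigr => s _ do rewrite scaler_prod -rmorph_prod.
  rewrite -scaler_sumr -raddf_sum.
  have -> : \sum_(s : 'S_d) \prod_(j < d) coef alpha (f j) (s j)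
      = chi_d alpha [seq f x | x <- enum 'I_d].
    rewrite chi_coef; last by rewrite size_map -cardE card_ord.
    apply: eq_bigr => s _; apply: eq_bigr => j _.
    by rewrite (nth_map j) ?size_enum_ord // nth_ord_enum.
  by rewrite Hchi raddf0 scaler0.
move: E2; under eq_bigr do rewrite E1.
rewrite sumr_const card_Sn -scaler_nat => /eqP; rewrite scalemx_eq0 => /orP [|/eqP //].
by rewrite -polyC_natr polyC_eq0 (negbTE (factK_neq0 Hc (leqnn d))).
Qed.

Lemma part1 : exists i : 'I_d, exists2 m : 'cV[K]_n, m != 0 & alpha i *m m = m.
Proof.
have := main_identity => /(congr1 determinant).
rewrite det0 (big_morph _ (@det_mulmx _ _) (@det1 R n)) => /eqP.
case/prodf_eq0 => j _ /eqP Dj; exists j.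
have : \det (map_mx (horner_eval (pt j)) (Smx - (L j)%:M)) == 0.
  by rewrite det_map_mx Dj rmorph0.
have -> : map_mx (horner_eval (pt j)) (Smx - (L j)%:M) = alpha j - 1%:M.
  rewrite map_mxB map_scalar_mx /= horner_evalE L_eval eqxx /Smx.
  rewrite raddf_sum (bigD1 j) //= big1 ?addr0.
    by rewrite map_mxZ /= horner_evalE L_eval eqxx scale1r /amx -map_mx_comp map_mx_id // => x /=; rewrite horner_evalE hornerC.
  move=> k kj; rewrite map_mxZ /= horner_evalE L_eval (negbTE kj) scale0r //.
rewrite -det_tr => /det0P [v v0 Hv]; exists v^T.
  by apply: contraNneq v0 => /eqP; rewrite -trmx0 => /eqP /(can_inj (@trmxK _ _ _)) ->.
apply/eqP; rewrite -subr_eq0 -{2}(mul1mx v^T) -mulmxBl.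
by rewrite -(trmxK (_ *m _)) trmx_mul trmxK Hv trmx0.
Qed.
End Part1.

Unset Implicit Arguments.

Theorem mainTheorem5 (K : fieldType) (d n : nat) (alpha : 'I_d -> 'M[K]_n) :
  (forall p : nat, p \in [pchar K] -> (d < p)%N) ->
  (0 < n)%N ->
  (forall w : seq 'I_d, chi_d alpha w = 0) ->
  (exists i : 'I_d, exists2 m : 'cV[K]_n, m != 0 & alpha i *m m = m) /\
  (forall (i : 'I_d) (m : 'cV[K]_n), alpha i *m m = m ->
     forall j : 'I_d, j != i -> alpha j *m m = 0).
Proof.
move=> Hc; case: n alpha => [//|n'] alpha _ Hchi; split.
  exact: (part1 Hc Hchi).
exact: (part2 Hc Hchi).
Qed.
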